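(* Consider four agents in the plane with positions $p_1,p_2,p_3,p_4\in\mathbb{R}^2$, interaction graph with edge set $E=\{(1,2),(1,3),(2,3),(3,4)\}$, feasible desired distances, a potential satisfying the stated assumptions, and the dynamics $\dot p_i=-\sum_{j\in\mathcal{N}_i} g_{ij}(p_i-p_j)$. Let $p^*$ be an undesired equilibrium (i.e. $p^*\in\mathcal{Q}_I$) at which $p^*_1,p^*_2,p^*_3$ are collinear. Then, for a suitable labeling $\{i,j,k\}=\{1,2,3\}$, exactly one of the following configurations occurs, with the stated properties (all quantities evaluated at $p^*$): (a) the three agents are distinct and $p^*_j$ lies strictly between $p^*_i$ and $p^*_k$ on the line; then $g_{ij}<0$, $g_{jk}<0$, $g_{ik}>0$, $g_{ij}+g_{ik}<0$ and $g_{jk}+g_{ik}<0$; (b) $p^*_j=p^*_k\neq p^*_i$ (a pair of agents coincide and the remaining agent is at another position); then $g_{jk}<0$ and $g_{ij}=g_{ik}=0$; (c) $p^*_i=p^*_j=p^*_k$; then $g_{ij}<0$, $g_{jk}<0$, $g_{ik}<0$.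
   Context: Agents have single-integrator dynamics $\dot p_i=u_i$. For each edge $(i,j)$ a desired distance $\bar d_{ij}>0$ is given; the set of desired distances is feasible, meaning that whenever $(i,j),(j,k),(k,i)$ are edges, $\bar d_{ij}+\bar d_{jk}>\bar d_{ki}$, $\bar d_{jk}+\bar d_{ki}>\bar d_{ij}$, $\bar d_{ki}+\bar d_{ij}>\bar d_{jk}$ (here this applies to the triangle $1,2,3$). A potential $\phi(x,\bar d)$ is given such that for each fixed $\bar d>0$: $\phi(\cdot,\bar d)\ge 0$; $g(x,\bar d):=\partial\phi(x,\bar d)/\partial x$ is strictly monotonically increasing in $x$; $\phi$ and $g$ are continuously differentiable on $x\in(-\bar d^2,\infty)$ and each equals zero if and only if $x=0$; $\phi(\cdot,\bar d)$ is analytic in a neighbourhood of $0$. Write $z_{ij}=p_i-p_j$, $e_{ij}=\|z_{ij}\|^2-\bar d_{ij}^2$, $g_{ij}=g(e_{ij},\bar d_{ij})$ (symmetric in $i,j$), and $\mathcal{N}_i$ for the neighbours of $i$. The dynamics $\dot p_i=-\sum_{j\in\mathcal{N}_i}g_{ij}z_{ij}$ is the negative gradient of $V=\tfrac12\sum_{(i,j)\in E}\phi(e_{ij},\bar d_{ij})$. The equilibrium set is $\mathcal{Q}=\{p:\sum_{j\in\mathcal{N}_i}g_{ij}z_{ij}=0\ \forall i\}$; the desired set is $\mathcal{Q}_C=\{p\in\mathcal{Q}:\|z_{ij}\|=\bar d_{ij}\ \forall (i,j)\in E\}$; the undesired equilibrium set is $\mathcal{Q}_I=\mathcal{Q}\setminus\mathcal{Q}_C$.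 *)

(* Defs.v *)
From Stdlib Require Import Reals Lra List.
From Coquelicot Require Import Coquelicot.
Import ListNotations.
Open Scope R_scope.

Definition pt := (R * R)%type.
Definition vadd (u v : pt) : pt := (fst u + fst v, snd u + snd v).
Definition vscale (a : R) (u : pt) : pt := (a * fst u, a * snd u).
Definition vzero : pt := (0, 0).
Definition sqnorm (u : pt) : R := fst u ^ 2 + snd u ^ 2.
Definition vnorm (u : pt) : R := sqrt (sqnorm u).

Definition agents : list nat := [1; 2; 3; 4]%nat.
Definition E : list (nat * nat) := [(1,2); (1,3); (2,3); (3,4)]%nat.
Definition nbrs (i : nat) : list nat :=
  map snd (filter (fun e => Nat.eqb (fst e) i) E)
  ++ map fst (filter (fun e => Nat.eqb (snd e) i) E).

Definition potential_assumptions (phi g : R -> R -> R) : Prop :=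
  forall d : R, 0 < d ->
    (forall x, - d ^ 2 <= x -> 0 <= phi x d) /\
    (forall x y, - d ^ 2 <= x -> x < y -> g x d < g y d) /\
    (forall x, - d ^ 2 < x ->
        is_derive (fun y => phi y d) x (g x d) /\
        continuous (fun y => g y d) x /\
        ex_derive (fun y => g y d) x /\
        continuous (Derive (fun y => g y d)) x) /\
    (forall x, - d ^ 2 < x -> (phi x d = 0 <-> x = 0) /\ (g x d = 0 <-> x = 0)) /\
    (exists (r : R) (a : nat -> R), 0 < r /\
        forall x, Rabs x < r -> is_pseries a x (phi x d)).

Definition feasible (D : nat -> nat -> R) : Prop :=
  D 1%nat 2%nat + D 2%nat 3%nat > D 3%nat 1%nat /\
  D 2%nat 3%nat + D 3%nat 1%nat > D 1%nat 2%nat /\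
  D 3%nat 1%nat + D 1%nat 2%nat > D 2%nat 3%nat.

Section Quantities.
Variables (g : R -> R -> R) (D : nat -> nat -> R) (p : nat -> pt).

Definition z (i j : nat) : pt := (fst (p i) - fst (p j), snd (p i) - snd (p j)).
Definition e (i j : nat) : R := sqnorm (z i j) - D i j ^ 2.
Definition gg (i j : nat) : R := g (e i j) (D i j).

Definition in_Q : Prop :=
  forall i, In i agents ->
    fold_right vadd vzero (map (fun j => vscale (gg i j) (z i j)) (nbrs i)) = vzero.

Definition in_QC : Prop :=
  in_Q /\ forall ij, In ij E -> vnorm (z (fst ij) (snd ij)) = D (fst ij) (snd ij).

Definition in_QI : Prop := in_Q /\ ~ in_QC.

End Quantities.

Definition collinear (a b c : pt) : Prop :=
  (fst b - fst a) * (snd c - snd a) - (snd b - snd a) * (fst c - fst a) = 0.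

Definition strictly_between (a q b : pt) : Prop :=
  exists t : R, 0 < t < 1 /\ q = vadd (vscale (1 - t) a) (vscale t b).

(* Main.v *)
Require Import Defs.
From Stdlib Require Import Reals List Lra Psatz Classical.
From Coquelicot Require Import Coquelicot.
Import ListNotations.
Open Scope R_scope.

Definition sgn_ok (G x : R) : Prop :=
  (G < 0 <-> x < 0) /\ (G = 0 <-> x = 0) /\ (0 < G <-> 0 < x).
Definition sq (a b : pt) : R := (fst a - fst b)^2 + (snd a - snd b)^2.

Lemma sq_sym a b : sq a b = sq b a.
Proof. unfold sq; ring. Qed.

Lemma sgn_swap G a b d : sgn_ok G (sq a b - d^2) -> sgn_ok G (sq b a - d^2).
Proof. rewrite sq_sym; auto. Qed.

Lemma sgn_from_pot phi g : potential_assumptions phi g ->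
  forall d x, 0 < d -> - d^2 <= x -> sgn_ok (g x d) x.
Proof.
  intros Hpot d x Hd Hx.
  destruct (Hpot d Hd) as [_ [Hmon [_ [Hz _]]]].
  assert (g0 : g 0 d = 0).
  { apply (proj2 (Hz 0 ltac:(nra))); reflexivity. }
  destruct (Rtotal_order x 0) as [h|[h|h]].
  - pose proof (Hmon x 0 Hx h). unfold sgn_ok; repeat split; intros; lra.
  - subst. rewrite g0. unfold sgn_ok; repeat split; intros; lra.
  - pose proof (Hmon 0 x ltac:(nra) h). unfold sgn_ok; repeat split; intros; lra.
Qed.

Lemma sqrt_lt_help x y : 0 <= x -> 0 < y -> y^2 < x^2 -> y < x.
Proof. intros; nra. Qed.
Lemma sqrt_eq_help x y : 0 <= x -> 0 <= y -> y^2 = x^2 -> y = x.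
Proof. intros. assert ((x - y) * (x + y) = 0) by nra.
  destruct (Rmult_integral _ _ H2); nra. Qed.

Lemma scal_zero al u1 u2 : al * u1 = 0 -> al * u2 = 0 -> (u1 <> 0 \/ u2 <> 0) -> al = 0.
Proof.
  intros h1 h2 [h|h]; [destruct (Rmult_integral _ _ h1) | destruct (Rmult_integral _ _ h2)]; tauto.
Qed.

Lemma pt_neq (a c : pt) : a <> c -> fst a <> fst c \/ snd a <> snd c.
Proof.
  destruct a as [a1 a2], c as [c1 c2]; simpl; intros H.
  destruct (Req_dec a1 c1); [|auto]. destruct (Req_dec a2 c2); [|auto]. subst; tauto.
Qed.

Lemma core_a (a b c : pt) (Gij Gjk Gik dij djk dik : R) :
  0 < dij -> 0 < djk -> 0 < dik -> dik < dij + djk ->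
  sgn_ok Gij (sq a b - dij^2) -> sgn_ok Gjk (sq b c - djk^2) -> sgn_ok Gik (sq a c - dik^2) ->
  Gij * (fst a - fst b) + Gik * (fst a - fst c) = 0 ->
  Gij * (snd a - snd b) + Gik * (snd a - snd c) = 0 ->
  Gik * (fst c - fst a) + Gjk * (fst c - fst b) = 0 ->
  Gik * (snd c - snd a) + Gjk * (snd c - snd b) = 0 ->
  a <> c -> strictly_between a b c ->
  Gij < 0 /\ Gjk < 0 /\ Gik > 0 /\ Gij + Gik < 0 /\ Gjk + Gik < 0.
Proof.
  intros d1 d2 d3 tri Sij Sjk Sik E1 E2 E3 E4 Hac [t [Ht Hb]].
  apply pt_neq in Hac.
  destruct a as [a1 a2], c as [c1 c2]; subst b. unfold vadd, vscale, sq in *; cbn [fst snd] in *.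
  set (S := (a1 - c1)^2 + (a2 - c2)^2) in *.
  assert (HS : 0 < S).
  { unfold S. destruct Hac as [h|h]; [assert (a1 - c1 <> 0) by lra | assert (a2 - c2 <> 0) by lra];
    pose proof (pow2_ge_0 (a1 - c1)); pose proof (pow2_ge_0 (a2 - c2));
    [pose proof (pow2_gt_0 _ H) | pose proof (pow2_gt_0 _ H)]; lra. }
  replace ((a1 - ((1 - t) * a1 + t * c1)) ^ 2 + (a2 - ((1 - t) * a2 + t * c2)) ^ 2)
    with (t^2 * S) in Sij by (unfold S; ring).
  replace (((1 - t) * a1 + t * c1 - c1) ^ 2 + ((1 - t) * a2 + t * c2 - c2) ^ 2)
    with ((1-t)^2 * S) in Sjk by (unfold S; ring).
  assert (K1 : t * Gij + Gik = 0).
  { apply (scal_zero _ (a1 - c1) (a2 - c2)).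
    - transitivity (Gij * (a1 - ((1 - t) * a1 + t * c1)) + Gik * (a1 - c1)); [ring|exact E1].
    - transitivity (Gij * (a2 - ((1 - t) * a2 + t * c2)) + Gik * (a2 - c2)); [ring|exact E2].
    - destruct Hac; [left|right]; lra. }
  assert (K2 : Gik + (1 - t) * Gjk = 0).
  { apply (scal_zero _ (c1 - a1) (c2 - a2)).
    - transitivity (Gik * (c1 - a1) + Gjk * (c1 - ((1 - t) * a1 + t * c1))); [ring|exact E3].
    - transitivity (Gik * (c2 - a2) + Gjk * (c2 - ((1 - t) * a2 + t * c2))); [ring|exact E4].
    - destruct Hac; [left|right]; lra. }
  clear E1 E2 E3 E4.
  pose proof (sqrt_pos S) as r0. pose proof (sqrt_sqrt S ltac:(lra)) as rr.
  set (r := sqrt S) in *.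
  assert (Sr : S = r^2) by (rewrite <- rr; ring).
  clearbody r S. subst S.
  destruct Sij as [Sij1 [Sij2 Sij3]]. destruct Sjk as [Sjk1 [Sjk2 Sjk3]].
  destruct Sik as [Sik1 [Sik2 Sik3]].
  assert (tr0 : 0 <= t * r) by (clear - Ht r0; nra).
  assert (tr1 : 0 <= (1 - t) * r) by (clear - Ht r0; nra).
  destruct (Rtotal_order Gik 0) as [h|[h|h]].
  - exfalso.
    assert (g1 : 0 < Gij) by (clear - K1 h Ht; nra). assert (g2 : 0 < Gjk) by (clear - K2 h Ht; nra).
    apply Sik1 in h. apply Sij3 in g1. apply Sjk3 in g2.
    assert (dij < t * r) by (apply sqrt_lt_help; [exact tr0|exact d1|]; clear - g1; nra).
    assert (djk < (1-t) * r) by (apply sqrt_lt_help; [exact tr1|exact d2|]; clear - g2; nra).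
    assert (r < dik) by (clear - h d3 r0; nra).
    clear - H H0 H1 tri. nra.
  - exfalso.
    assert (g1 : Gij = 0) by (clear - K1 h Ht; nra). assert (g2 : Gjk = 0) by (clear - K2 h Ht; nra).
    apply Sik2 in h. apply Sij2 in g1. apply Sjk2 in g2.
    assert (dij = t * r) by (apply sqrt_eq_help; [exact tr0|lra|]; clear - g1; nra).
    assert (djk = (1-t) * r) by (apply sqrt_eq_help; [exact tr1|lra|]; clear - g2; nra).
    assert (r = dik) by (apply sqrt_eq_help; [lra|exact r0|]; clear - h; nra).
    clear - H H0 H1 tri. nra.
  - assert (g1 : Gij < 0) by (clear - K1 h Ht; nra). assert (g2 : Gjk < 0) by (clear - K2 h Ht; nra).
    repeat split; try lra; clear - K1 K2 g1 g2 Ht; nra.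
Qed.

Lemma core_b (a b c : pt) (Gij Gjk Gik djk : R) :
  0 < djk -> sgn_ok Gjk (sq b c - djk^2) ->
  Gij * (fst a - fst b) + Gik * (fst a - fst c) = 0 ->
  Gij * (snd a - snd b) + Gik * (snd a - snd c) = 0 ->
  Gij * (fst b - fst a) + Gjk * (fst b - fst c) = 0 ->
  Gij * (snd b - snd a) + Gjk * (snd b - snd c) = 0 ->
  b = c -> b <> a ->
  Gjk < 0 /\ Gij = 0 /\ Gik = 0.
Proof.
  intros d S E1 E2 E3 E4 Hbc Hba. subst c. apply pt_neq in Hba.
  destruct a as [a1 a2], b as [b1 b2]; unfold sq in *; cbn [fst snd] in *.
  destruct S as [S1 _].
  assert (Gjk < 0) by (apply S1; nra).
  assert (Gij = 0).
  { apply (scal_zero _ (b1 - a1) (b2 - a2)); [nra|nra|]. destruct Hba; [left|right]; lra. }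
  subst Gij. split; [lra|split; [lra|]].
  apply (scal_zero _ (a1 - b1) (a2 - b2)); [nra|nra|]. destruct Hba; [left|right]; lra.
Qed.

Lemma core_c (a : pt) G d : 0 < d -> sgn_ok G (sq a a - d^2) -> G < 0.
Proof. intros h [S _]. apply S. unfold sq. nra. Qed.

Lemma coll_cases (a b c : pt) : a <> b -> b <> c -> a <> c -> collinear a b c ->
  strictly_between a c b \/ strictly_between a b c \/ strictly_between b a c.
Proof.
  intros hab hbc hac Hc. unfold collinear in Hc.
  assert (hab' := pt_neq _ _ hab). assert (hbc' := pt_neq _ _ hbc). assert (hac' := pt_neq _ _ hac).
  destruct a as [a1 a2], b as [b1 b2], c as [c1 c2]; simpl in *.
  assert (Hs : exists s, c1 - a1 = s * (b1 - a1) /\ c2 - a2 = s * (b2 - a2)).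
  { destruct hab' as [h|h].
    - exists ((c1 - a1) / (b1 - a1)). split; [field; lra|].
      apply (Rmult_eq_reg_l (b1 - a1)); [|lra]. field_simplify; [|lra]. nra.
    - exists ((c2 - a2) / (b2 - a2)). split; [|field; lra].
      apply (Rmult_eq_reg_l (b2 - a2)); [|lra]. field_simplify; [|lra]. nra. }
  destruct Hs as [s [h1 h2]].
  assert (s <> 0). { intro; subst. destruct hac'; nra. }
  assert (s <> 1). { intro; subst. destruct hbc'; nra. }
  unfold strictly_between, vadd, vscale; simpl.
  destruct (Rlt_or_le s 0) as [hs|hs].
  - right; right. exists (1 / (1 - s)). split.
    + split; [apply Rdiv_lt_0_compat; lra|]. apply (Rmult_lt_reg_r (1 - s)); [lra|].
      field_simplify; lra.
    + f_equal; field_simplify; try lra.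
      * replace c1 with (a1 + s * (b1 - a1)) by lra. field; lra.
      * replace c2 with (a2 + s * (b2 - a2)) by lra. field; lra.
  - destruct (Rlt_or_le s 1) as [hs'|hs'].
    + left. exists s. split; [lra|]. f_equal; lra.
    + right; left. exists (1 / s). split.
      * split; [apply Rdiv_lt_0_compat; lra|]. apply (Rmult_lt_reg_r s); [lra|].
        field_simplify; lra.
      * f_equal.
        -- replace c1 with (a1 + s * (b1 - a1)) by lra. field; lra.
        -- replace c2 with (a2 + s * (b2 - a2)) by lra. field; lra.
Qed.

Lemma core_c' (a b : pt) G d : 0 < d -> sgn_ok G (sq a b - d^2) -> a = b -> G < 0.
Proof. intros h S E. subst b. exact (core_c a G d h S). Qed.

Ltac excl := split; [|split]; let H := fresh "HH" in intro H; decompose [and] H; congruence.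

Ltac side := first [assumption | (apply sgn_swap; assumption) | lra | congruence | (intro; congruence)].
Ltac hdr Hsym i j k := exists i%nat, j%nat, k%nat; do 3 (split; [cbn; tauto|]); do 3 (split; [discriminate|]);
    cbv zeta; rewrite ?(Hsym 2%nat 1%nat), ?(Hsym 3%nat 1%nat), ?(Hsym 3%nat 2%nat); split; [|excl].
Ltac fin K := let K' := fresh in pose proof K as K'; repeat match type of K' with ?A -> ?B => let h := fresh in assert (h : A) by side; specialize (K' h) end;
    repeat split; try side; tauto.

Theorem lemma2 (phi g : R -> R -> R) (D : nat -> nat -> R) (p : nat -> pt)
  (Hpot : potential_assumptions phi g)
  (Dsym : forall i j, D i j = D j i)
  (Dpos : forall ij, In ij E -> 0 < D (fst ij) (snd ij))
  (Hfeas : feasible D)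
  (HQI : in_QI g D p)
  (Hcol : collinear (p 1%nat) (p 2%nat) (p 3%nat)) :
  exists i j k : nat,
    In i [1; 2; 3]%nat /\ In j [1; 2; 3]%nat /\ In k [1; 2; 3]%nat /\
    i <> j /\ j <> k /\ i <> k /\
    let Ca :=
      (p i <> p j /\ p j <> p k /\ p i <> p k /\ strictly_between (p i) (p j) (p k) /\
       gg g D p i j < 0 /\ gg g D p j k < 0 /\ gg g D p i k > 0 /\
       gg g D p i j + gg g D p i k < 0 /\ gg g D p j k + gg g D p i k < 0) in
    let Cb :=
      (p j = p k /\ p j <> p i /\
       gg g D p j k < 0 /\ gg g D p i j = 0 /\ gg g D p i k = 0) in
    let Cc :=
      (p i = p j /\ p j = p k /\
       gg g D p i j < 0 /\ gg g D p j k < 0 /\ gg g D p i k < 0) in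
    (Ca \/ Cb \/ Cc) /\ ~ (Ca /\ Cb) /\ ~ (Ca /\ Cc) /\ ~ (Cb /\ Cc).
Proof.
  destruct HQI as [HQ _].
  assert (Hsym : forall x y, gg g D p x y = gg g D p y x).
  { intros x y. unfold gg, e. rewrite (Dsym x y). f_equal. f_equal.
    unfold sqnorm, z; cbn [fst snd]; ring. }
  assert (Hsg : forall x y, 0 < D x y -> sgn_ok (gg g D p x y) (sq (p x) (p y) - D x y ^ 2)).
  { intros x y hd. unfold gg, e.
    replace (sqnorm (z p x y)) with (sq (p x) (p y)) by (unfold sq, sqnorm, z; cbn [fst snd]; ring).
    apply (sgn_from_pot phi g Hpot); auto.
    unfold sq. pose proof (pow2_ge_0 (fst (p x) - fst (p y))).
    pose proof (pow2_ge_0 (snd (p x) - snd (p y))). lra. }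
  assert (D12 : 0 < D 1%nat 2%nat) by (apply (Dpos (1,2)%nat); cbn; tauto).
  assert (D13 : 0 < D 1%nat 3%nat) by (apply (Dpos (1,3)%nat); cbn; tauto).
  assert (D23 : 0 < D 2%nat 3%nat) by (apply (Dpos (2,3)%nat); cbn; tauto).
  pose proof (Hsg _ _ D12) as S12. pose proof (Hsg _ _ D13) as S13. pose proof (Hsg _ _ D23) as S23.
  destruct Hfeas as [F1 [F2 F3]]. rewrite (Dsym 3%nat 1%nat) in F1, F2, F3.
  pose proof (HQ 1%nat ltac:(cbn; tauto)) as Q1.
  pose proof (HQ 2%nat ltac:(cbn; tauto)) as Q2.
  pose proof (HQ 3%nat ltac:(cbn; tauto)) as Q3.
  pose proof (HQ 4%nat ltac:(cbn; tauto)) as Q4.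
  cbv [nbrs Defs.E filter map Nat.eqb fold_right vadd vscale vzero z] in Q1, Q2, Q3, Q4; cbn [fst snd] in Q1, Q2, Q3, Q4.
  injection Q1 as Q1a Q1b. injection Q2 as Q2a Q2b. injection Q3 as Q3a Q3b.
  injection Q4 as Q4a Q4b.
  rewrite (Hsym 2%nat 1%nat) in Q2a, Q2b. rewrite (Hsym 3%nat 1%nat), (Hsym 3%nat 2%nat) in Q3a, Q3b.
  rewrite (Hsym 4%nat 3%nat) in Q4a, Q4b.

  assert (Q3a' : gg g D p 1 3 * (fst (p 3%nat) - fst (p 1%nat)) + gg g D p 2 3 * (fst (p 3%nat) - fst (p 2%nat)) = 0) by lra.
  assert (Q3b' : gg g D p 1 3 * (snd (p 3%nat) - snd (p 1%nat)) + gg g D p 2 3 * (snd (p 3%nat) - snd (p 2%nat)) = 0) by lra.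
  clear Q3a Q3b Q4a Q4b HQ.
  destruct (classic (p 1%nat = p 2%nat)) as [e12|n12];
  destruct (classic (p 2%nat = p 3%nat)) as [e23|n23];
  destruct (classic (p 1%nat = p 3%nat)) as [e13|n13]; try congruence.
  - hdr Hsym 1%nat 2%nat 3%nat. right; right.
    pose proof (core_c' _ _ _ _ D12 S12 e12).
    pose proof (core_c' _ _ _ _ D23 S23 e23).
    pose proof (core_c' _ _ _ _ D13 S13 e13).
    repeat split; side.
  - hdr Hsym 3%nat 1%nat 2%nat. right; left.
    fin (core_b (p 3%nat) (p 1%nat) (p 2%nat) (gg g D p 1 3) (gg g D p 1 2) (gg g D p 2 3) (D 1%nat 2%nat)).
  - hdr Hsym 1%nat 2%nat 3%nat. right; left.
    fin (core_b (p 1%nat) (p 2%nat) (p 3%nat) (gg g D p 1 2) (gg g D p 2 3) (gg g D p 1 3) (D 2%nat 3%nat)).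
  - hdr Hsym 2%nat 1%nat 3%nat. right; left.
    fin (core_b (p 2%nat) (p 1%nat) (p 3%nat) (gg g D p 1 2) (gg g D p 1 3) (gg g D p 2 3) (D 1%nat 3%nat)).
  - destruct (coll_cases _ _ _ n12 n23 n13 Hcol) as [B|[B|B]].
    + hdr Hsym 1%nat 3%nat 2%nat. left.
      fin (core_a (p 1%nat) (p 3%nat) (p 2%nat) (gg g D p 1 3) (gg g D p 2 3) (gg g D p 1 2)
             (D 1%nat 3%nat) (D 2%nat 3%nat) (D 1%nat 2%nat)).
    + hdr Hsym 1%nat 2%nat 3%nat. left.
      fin (core_a (p 1%nat) (p 2%nat) (p 3%nat) (gg g D p 1 2) (gg g D p 2 3) (gg g D p 1 3)
             (D 1%nat 2%nat) (D 2%nat 3%nat) (D 1%nat 3%nat)).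
    + hdr Hsym 2%nat 1%nat 3%nat. left.
      fin (core_a (p 2%nat) (p 1%nat) (p 3%nat) (gg g D p 1 2) (gg g D p 1 3) (gg g D p 2 3)
             (D 1%nat 2%nat) (D 1%nat 3%nat) (D 2%nat 3%nat)).
Qed.
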